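(* Let $\Theta=\{x_1,\dots,x_n\}$ be a finite frame of discernment and let $m$ be a basic probability assignment on $\Theta$ whose pignistic probabilities satisfy $\mathrm{BetP}(x)>0$ for every $x\in\Theta$. Fix a nonempty subset $B\subseteq\Theta$ with $|B|=g$. Then $$\sum_{A\in \mathrm{PES}(\Theta):\ \mathrm{Element}(A)=B} \mathrm{Sord}(A)=1,$$ i.e. the ordered support degrees of the $g!$ permutation events that are orderings of the elements of $B$ sum to $1$.
   Context: A basic probability assignment (BPA) on a finite set $\Theta$ is a map $m:2^{\Theta}\to[0,1]$ with $m(\emptyset)=0$ and $\sum_{A\subseteq\Theta}m(A)=1$. Its pignistic probability transformation is $\mathrm{BetP}(x)=\sum_{A\subseteq\Theta,\,x\in A} m(A)/|A|$ for $x\in\Theta$. The permutation event space $\mathrm{PES}(\Theta)$ is the set of all ordered tuples $A=(\beta_1,\dots,\beta_k)$ of distinct elements of $\Theta$, $0\le k\le n$ (permutation events); $|A|=k$ and $\mathrm{Element}(A)=\{\beta_1,\dots,\beta_k\}$ denotes the underlying unordered set. For a nonempty permutation event $A=(\beta_1,\dots,\beta_{|A|})$, its ordered support degree is $$\mathrm{Sord}(A)=\prod_{i=1}^{|A|}\frac{\mathrm{BetP}(\beta_i)}{\sum_{j=i}^{|A|}\mathrm{BetP}(\beta_j)}.$$ *)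

(* Defs.v *)
From mathcomp Require Import all_boot all_order all_algebra.
Set Implicit Arguments. Unset Strict Implicit. Unset Printing Implicit Defensive.
Import Order.TTheory GRing.Theory Num.Theory.
Local Open Scope ring_scope.

Definition is_bpa (R : realFieldType) (T : finType) (m : {set T} -> R) : Prop :=
  m set0 = 0 /\ (forall A, 0 <= m A <= 1) /\ \sum_(A : {set T}) m A = 1.

Definition BetP (R : realFieldType) (T : finType) (m : {set T} -> R) (x : T) : R :=
  \sum_(A : {set T} | x \in A) m A / #|A|%:R.

Definition perm_event (T : finType) (s : seq T) : bool := uniq s.

Definition Element (T : finType) (s : seq T) : {set T} := [set x in s].

Definition Sord (R : realFieldType) (T : finType) (m : {set T} -> R) (s : seq T) : R :=
  \prod_(i < size s)
     (BetP m (tnth (in_tuple s) i)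
      / \sum_(j < size s | (i <= j)%N) BetP m (tnth (in_tuple s) j)).

(* Main.v *)
Require Import Defs.
From mathcomp Require Import all_boot all_order all_algebra.
Import Order.TTheory GRing.Theory Num.Theory.
Local Open Scope ring_scope.

Section Aux.
Variables (R : realFieldType) (T : finType) (p : T -> R).
Hypothesis hp : forall x, 0 < p x.

Fixpoint sordr (s : seq T) : R :=
  if s is x :: s' then p x / (p x + \sum_(y <- s') p y) * sordr s' else 1.

Lemma big_tuple_cons n (P : pred ((n.+1).-tuple T)) (F : (n.+1).-tuple T -> R) :
  \sum_(t : (n.+1).-tuple T | P t) F t =
  \sum_(x : T) \sum_(t : n.-tuple T | P [tuple of x :: t]) F [tuple of x :: t].
Proof.
rewrite [RHS]pair_big_dep /=.
rewrite (reindex (fun q : T * n.-tuple T => [tuple of q.1 :: q.2])) /=.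
  by apply: eq_bigl => -[x t].
exists (fun t : (n.+1).-tuple T => (thead t, [tuple of behead t])).
  by move=> [x t] _ /=; rewrite theadE; congr pair; apply: val_inj.
by move=> t _ /=; rewrite -tuple_eta.
Qed.

Lemma main n : forall S : {set T}, #|S| = n ->
  \sum_(t : n.-tuple T | uniq t && ([set x in t] == S)) sordr t = 1.
Proof.
elim: n => [|n IH] S hS.
  have -> : S = set0 by apply/eqP; rewrite -cards_eq0 hS.
  rewrite (big_pred1 [tuple]) //= => t.
  rewrite tuple0 /=.
  have -> : [set x in ([::] : seq T)] = set0 by apply/setP => x; rewrite !inE.
  by rewrite eqxx.
rewrite big_tuple_cons (bigID (mem S)) /=.
rewrite [X in _ + X]big1 ?addr0; last first.
  move=> x xS; apply: big1 => t /andP[_ /eqP ht].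
  by move: xS; rewrite -ht inE mem_head.
have [x0 x0S] : {x0 | x0 \in S}.
  case: (pickP (mem S)) => [x hx|h]; first by exists x.
  by move: hS; rewrite (eq_card0 h).
set D := \sum_(y in S) p y.
have Dgt0 : 0 < D.
  rewrite /D (bigD1 x0) //=; apply: ltr_pwDl (hp x0) _.
  by apply: sumr_ge0 => y _; apply: ltW.
transitivity (\sum_(x in S) p x / D).
  apply: eq_bigr => x xS.
  have hSx : #|S :\ x| = n by move: hS; rewrite (cardsD1 x) xS; case.
  have hD : p x + \sum_(y in S :\ x) p y = D.
    rewrite /D [RHS](bigD1 x) //=; congr (_ + _); apply: eq_bigl => y.
    by rewrite !inE andbC.
  rewrite -[RHS]mulr1 -(IH _ hSx) mulr_sumr.
  apply: eq_big => t.
    rewrite /= -andbA; apply/andP/andP.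
      move=> [/negP xt /andP[ut /eqP ht]]; split=> //; apply/eqP/setP => y.
      rewrite !inE -ht !inE; case: eqP => [->|] //=; apply/negbTE/negP => h.
      by apply: xt.
    move=> [ut /eqP ht]; have xt : x \notin t.
      by apply/negP => h; have := h; rewrite -[_ \in t]in_set ht !inE eqxx.
    rewrite xt ut; split=> //; apply/eqP/setP => y; rewrite !inE.
    case: eqP => [->|ne] //=; rewrite -[_ \in t]in_set ht !inE.
    by move/eqP: ne => ne; rewrite ne.
  move=> /andP[/andP[xt ut] /eqP ht] /=; congr (_ / _ * _); rewrite -hD; congr (_ + _).
  rewrite big_uniq //; apply: eq_bigl => y; rewrite -ht !inE.
  by case: eqP => [->|] //=; rewrite (negbTE xt).
by rewrite -mulr_suml divff // gt_eqF.
Qed.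

End Aux.

Lemma SordE (R : realFieldType) (T : finType) (m : {set T} -> R) (s : seq T) :
  Sord m s = @sordr R T (BetP m) s.
Proof.
elim: s => [|x s IH]; first by rewrite /Sord big_ord0.
rewrite /Sord /= big_ord_recl -IH /Sord; congr (_ * _).
  rewrite (tnth_nth x) /=; congr (_ / _).
  rewrite big_ord_recl /=; congr (_ + _).
  rewrite (big_nth x) big_mkord; apply: eq_bigr => i _.
  by rewrite !(tnth_nth x) /=.
apply: eq_bigr => i _.
rewrite !(tnth_nth x) /=; congr (_ / _).
rewrite big_mkcond big_ord_recl /= [RHS]big_mkcond /bump /= add0r.
apply: eq_bigr => j _; rewrite /bump /= !add1n ltnS.
by case: ifP => // _; rewrite !(tnth_nth x).
Qed.

Theorem corollary1 (R : realFieldType) (T : finType) (m : {set T} -> R)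
  (B : {set T}) :
  is_bpa m ->
  (forall x : T, 0 < BetP m x) ->
  B != set0 ->
  \sum_(A : (#|B|).-tuple T | perm_event A && (Element A == B)) Sord m A = 1.
Proof.
move=> _ hp _.
rewrite -(@main R T (BetP m) hp _ B (erefl #|B|)); apply: eq_bigr => t _; exact: SordE.
Qed.
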